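(* Let $\delta_0=\frac14-\frac{2}{\pi^2}$. For every $\epsilon>0$ there exists a set $A\subseteq\mathbb{N}$ having (natural) density greater than $\delta_0-\epsilon$ such that: $A+A$ contains no squarefree integer; $A+A+A$ contains all positive integers with finitely many exceptions; and the set of positive integers which are not squarefree and are not contained in $A+A$ has upper density at most $\epsilon$.
   Context: $A+A=\{a+b:a,b\in A\}$, $A+A+A=\{a+b+c:a,b,c\in A\}$. *)

(* Defs.v *)
From Stdlib Require Import Reals Lra Lia Arith ClassicalEpsilon.
Open Scope R_scope.

Definition squarefree (n : nat) : Prop :=
  (0 < n)%nat /\ forall d : nat, (2 <= d)%nat -> ~ Nat.divide (d * d) n.

Definition sumset2 (A : nat -> Prop) (m : nat) : Prop :=
  exists a b, A a /\ A b /\ m = (a + b)%nat.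
Definition sumset3 (A : nat -> Prop) (m : nat) : Prop :=
  exists a b c, A a /\ A b /\ A c /\ m = (a + b + c)%nat.

Fixpoint cnt (P : nat -> Prop) (n : nat) : nat :=
  match n with
  | O => O
  | S m => (cnt P m + (if excluded_middle_informative (P (S m)) then 1 else 0))%nat
  end.

Definition has_density (P : nat -> Prop) (d : R) : Prop :=
  Un_cv (fun n => INR (cnt P (S n)) / INR (S n)) d.

Definition upper_density_le (P : nat -> Prop) (c : R) : Prop :=
  forall eta : R, 0 < eta -> exists N : nat, forall n : nat, (N <= n)%nat ->
    INR (cnt P (S n)) / INR (S n) <= c + eta.

Definition delta0 : R := 1/4 - 2 / (PI ^ 2).

(* Main.v *)
Require Import Defs.
From Coquelicot Require Import Coquelicot.
From Stdlib Require Import Reals Lra Lia Arith ZArith ZifyNat ClassicalEpsilon Classical.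
Open Scope R_scope.

Lemma FTC (F f : R -> R) a b : (forall x, is_derive F x (f x)) ->
  (forall x, ex_derive f x) -> is_RInt f a b (F b - F a).
Proof.
intros HF Hf. change (F b - F a) with (minus (F b) (F a)).
refine (@is_RInt_derive R_CompleteNormedModule F f a b _ _); intros;
 [apply HF| apply (@ex_derive_continuous R_AbsRing R_NormedModule), Hf].
Qed.

Lemma exR (f : R -> R) a b : (forall x, ex_derive f x) -> ex_RInt f a b.
Proof. intros Hf. apply (@ex_RInt_continuous R_CompleteNormedModule). intros.
apply (@ex_derive_continuous R_AbsRing R_NormedModule), Hf. Qed.

Lemma lin3 (f g h : R -> R) a b c1 c2 c3 v :
  ex_RInt f a b -> ex_RInt g a b -> ex_RInt h a b ->
  is_RInt (fun x => c1 * f x + c2 * g x + c3 * h x) a b v ->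
  c1 * RInt f a b + c2 * RInt g a b + c3 * RInt h a b = v.
Proof.
intros Hf Hg Hh Hv.
apply (@RInt_correct R_CompleteNormedModule) in Hf. apply (@RInt_correct R_CompleteNormedModule) in Hg. apply (@RInt_correct R_CompleteNormedModule) in Hh.
pose proof (is_RInt_plus _ _ _ _ _ _ (is_RInt_plus _ _ _ _ _ _ (is_RInt_scal _ _ _ c1 _ Hf) (is_RInt_scal _ _ _ c2 _ Hg)) (is_RInt_scal _ _ _ c3 _ Hh)) as H.
apply (@is_RInt_unique R_CompleteNormedModule) in H. apply (@is_RInt_unique R_CompleteNormedModule) in Hv.
rewrite <- Hv. exact (eq_sym H).
Qed.

Lemma sc x : sin x * sin x = 1 - cos x * cos x.
Proof. pose proof (sin2_cos2 x). unfold Rsqr in H. lra. Qed.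

Lemma dA (m : nat) x : is_derive (fun x => sin x * cos x ^ (2*m+1)) x
  (INR (2*m+2) * cos x ^ (2*m+2) + - INR (2*m+1) * cos x ^ (2*m) + 0 * 0).
Proof.
auto_derive; auto.
replace (m + (m + 0) + 1)%nat with (2*m+1)%nat by lia.
replace (Init.Nat.pred (2*m+1)) with (2*m)%nat by lia.
rewrite !pow_add. rewrite !plus_INR, !mult_INR. simpl.
pose proof (sc x). set (p := cos x ^ (m + (m+0))) in *. set (s := sin x) in *. set (c := cos x) in *. set (k := INR m) in *. replace (s * (1 * - s * (((1 + 1) * k + 1) * p))) with (-(s*s) * (((1 + 1) * k + 1) * p)) by ring. rewrite H. ring.
Qed.

Lemma dB (m : nat) x : is_derive (fun x => x * cos x ^ (2*m+2) + INR (m+1) * (x^2 * (sin x * cos x ^ (2*m+1)))) x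
  (1 * cos x ^ (2*m+2) + (2 * INR (m+1) ^ 2) * (x^2 * cos x ^ (2*m+2)) + (- (INR (m+1) * INR (2*m+1))) * (x^2 * cos x^(2*m))).
Proof.
auto_derive; auto.
replace (m + (m + 0) + 1)%nat with (2*m+1)%nat by lia.
replace (m + (m + 0) + 2)%nat with (2*m+2)%nat by lia.
replace (Init.Nat.pred (2*m+1)) with (2*m)%nat by lia.
replace (Init.Nat.pred (2*m+2)) with (2*m+1)%nat by lia.
rewrite !pow_add. rewrite !plus_INR, !mult_INR. simpl.
pose proof (sc x). set (p := cos x ^ (m + (m+0))) in *. set (s := sin x) in *. set (c := cos x) in *. set (k := INR m) in *.
replace (s * (1 * - s * (((1 + 1) * k + 1) * p))) with (-(s*s) * (((1 + 1) * k + 1) * p)) by ring. rewrite H. ring.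
Qed.

Definition Ic n : R := RInt (fun x => cos x ^ (2*n)) 0 (PI/2).
Definition Jc n : R := RInt (fun x => x^2 * cos x ^ (2*n)) 0 (PI/2).

Lemma exI n : ex_RInt (fun x => cos x ^ (2*n)) 0 (PI/2).
Proof. apply exR. intros; auto_derive; auto. Qed.
Lemma exJ n : ex_RInt (fun x => x^2 * cos x ^ (2*n)) 0 (PI/2).
Proof. apply exR. intros; auto_derive; auto. Qed.

Lemma cpow0 k : cos (PI/2) ^ (S k) = 0.
Proof. rewrite cos_PI2. simpl. ring. Qed.

Ltac exr := apply exR; intros; auto_derive; auto.

Lemma IA m : INR (2*m+2) * Ic (m+1) = INR (2*m+1) * Ic m.
Proof.
assert (H := lin3 (fun x => cos x ^ (2*m+2)) (fun x => cos x ^ (2*m)) (fun _ => 0) 0 (PI/2) (INR (2*m+2)) (- INR (2*m+1)) 0 _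
  ltac:(exr) ltac:(exr) ltac:(exr)
  (FTC _ _ 0 (PI/2) (dA m) ltac:(intros; auto_derive; auto))).
unfold Ic. replace (2*(m+1))%nat with (2*m+2)%nat by lia.
replace (2*m+1)%nat with (S (2*m))%nat in H by lia.
rewrite cpow0, sin_0 in H. replace (2*m+1)%nat with (S (2*m))%nat by lia. lra.
Qed.

Lemma IB m : Ic (m+1) + 2 * INR (m+1) ^ 2 * Jc (m+1) = INR (m+1) * INR (2*m+1) * Jc m.
Proof.
assert (H := lin3 (fun x => cos x ^ (2*m+2)) (fun x => x^2 * cos x ^ (2*m+2)) (fun x => x^2 * cos x ^ (2*m)) 0 (PI/2) 1 (2 * INR (m+1) ^ 2) (- (INR (m+1) * INR (2*m+1)))  _
  ltac:(exr) ltac:(exr) ltac:(exr)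
  (FTC _ _ 0 (PI/2) (dB m) ltac:(intros; auto_derive; auto))).
unfold Ic, Jc. replace (2*(m+1))%nat with (2*m+2)%nat by lia.
replace (2*m+1)%nat with (S (2*m))%nat in H by lia.
replace (2*m+2)%nat with (S (2*m+1))%nat in H |- * by lia.
rewrite !cpow0, sin_0 in H. replace (S (2*m))%nat with (2*m+1)%nat in H by lia. lra.
Qed.

Lemma I0 : Ic 0 = PI/2.
Proof.
unfold Ic. simpl.
assert (H := FTC (fun x => x) (fun _ => 1) 0 (PI/2) ltac:(intros; auto_derive; auto) ltac:(intros; auto_derive; auto)).
apply (@is_RInt_unique R_CompleteNormedModule) in H. rewrite H. ring.
Qed.

Lemma J0 : Jc 0 = (PI/2)^3/3.
Proof.
unfold Jc. simpl.
assert (H := FTC (fun x => x^3/3) (fun x => x^2 * 1) 0 (PI/2) ltac:(intros; auto_derive; [auto|simpl; field]) ltac:(intros; auto_derive; auto)).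
apply (@is_RInt_unique R_CompleteNormedModule) in H. etransitivity; [exact H|]. match goal with |- ?a = ?b => change (@eq R a b) end. field.
Qed.

Lemma Ipos n : 0 < Ic n.
Proof.
induction n. rewrite I0. pose proof PI2_RGT_0. lra.
replace (S n) with (n+1)%nat by lia.
pose proof (IA n). assert (0 < INR (2*n+2)) by (apply lt_0_INR; lia).
assert (0 < INR (2*n+1)) by (apply lt_0_INR; lia).
assert (Ic (n+1) = INR (2*n+1) * Ic n / INR (2*n+2)) by (rewrite <- H; field; lra).
rewrite H2. apply Rdiv_lt_0_compat; [apply Rmult_lt_0_compat|]; lra.
Qed.

Lemma Jnonneg n : 0 <= Jc n.
Proof.
unfold Jc. apply RInt_ge_0. pose proof PI2_RGT_0; lra. exr.
intros. apply Rmult_le_pos. apply pow2_ge_0.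
replace (2*n)%nat with (n*2)%nat by lia. rewrite pow_mult. apply pow2_ge_0.
Qed.

Lemma xcos x : 0 <= x <= PI/2 -> x * cos x <= sin x.
Proof.
intros Hx.
assert (H := FTC (fun t => sin t - t * cos t) (fun t => t * sin t) 0 x
  ltac:(intros; auto_derive; [auto| ring]) ltac:(intros; auto_derive; auto)).
assert (0 <= RInt (fun t => t * sin t) 0 x).
{ apply RInt_ge_0. lra. exr. intros. apply Rmult_le_pos. lra. apply sin_ge_0; pose proof PI2_Rlt_PI; lra. }
apply (@is_RInt_unique R_CompleteNormedModule) in H. rewrite H in H0. rewrite sin_0 in H0. lra.
Qed.

Lemma Jbound m : Jc (m+1) <= Ic m - Ic (m+1).
Proof.
unfold Jc, Ic. rewrite <- (RInt_minus (V:=R_CompleteNormedModule)); [| exr | exr].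
apply RInt_le; [pose proof PI2_RGT_0; lra | exr | apply (ex_RInt_minus (V:=R_CompleteNormedModule)); exr |].
intros y Hx. replace (2*(m+1))%nat with (2*m+2)%nat by lia.
replace (minus (cos y ^ (2*m)) (cos y ^ (2*m+2))) with (cos y ^ (2*m) - cos y ^ (2*m+2)) by reflexivity.
rewrite pow_add.
assert (0 <= cos y ^ (2*m)). { replace (2*m)%nat with (m*2)%nat by lia. rewrite pow_mult. apply pow2_ge_0. }
assert (0 <= cos y) by (apply cos_ge_0; pose proof PI2_Rlt_PI; lra).
assert (y * cos y <= sin y) by (apply xcos; lra).
assert (0 <= y * cos y) by (apply Rmult_le_pos; lra).
pose proof (sc y).
assert (y*cos y * (y * cos y) <= sin y * sin y) by (apply Rmult_le_compat; lra).
set (p := cos y ^ (2*m)) in *. set (c := cos y) in *.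
assert (0 <= p * (sin y * sin y - y*c*(y*c))) by (apply Rmult_le_pos; lra).
rewrite H3 in H5. unfold minus, plus, opp. simpl. nra.
Qed.

Definition rr n := Jc n / Ic n.

Lemma rrec m : rr m - rr (m+1) = 1/(2*(INR (m+1))^2).
Proof.
pose proof (IA m) as HA. pose proof (IB m) as HB. pose proof (Ipos m). pose proof (Ipos (m+1)).
unfold rr.
assert (E1 : INR (2*m+2) = 2 * INR (m+1)) by (rewrite !plus_INR, !mult_INR; simpl; ring).
assert (E2 : INR (2*m+1) = 2 * INR (m+1) - 1) by (rewrite !plus_INR, !mult_INR; simpl; ring).
rewrite E1, E2 in HA. rewrite E2 in HB.
assert (Hn : 1 <= INR (m+1)) by (apply (le_INR 1); lia).
set (n := INR (m+1)) in *.
assert (Im : Ic m = 2*n*Ic (m+1)/(2*n-1)) by (rewrite HA; field; lra).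
assert (Jm : Jc m = (Ic (m+1) + 2*n^2 * Jc (m+1))/(n*(2*n-1))) by (rewrite HB; field; lra).
rewrite Im, Jm. field. repeat split; lra.
Qed.

Fixpoint zs (N:nat) : R := match N with 0 => 0 | S k => zs k + 1/(INR (S k))^2 end.

Lemma zs_eq N : zs N = PI^2/6 - 2 * rr N.
Proof.
induction N.
- simpl. unfold rr. rewrite I0, J0. field. pose proof PI2_RGT_0; lra.
- change (zs (S N)) with (zs N + 1/(INR (S N))^2). rewrite IHN. pose proof (rrec N). replace (S N) with (N+1)%nat by lia.
  
  assert (rr N = rr (N+1) + 1 / (2 * INR (N+1) ^2)) by lra. rewrite H0. field.
  apply not_0_INR. lia.
Qed.

Lemma rr_bound m : 0 <= rr (m+1) <= 1 / INR (2*m+1).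
Proof.
pose proof (IA m) as HA. pose proof (Jbound m). pose proof (Ipos m). pose proof (Ipos (m+1)).
pose proof (Jnonneg (m+1)). unfold rr.
assert (0 < INR (2*m+1)) by (apply lt_0_INR; lia).
assert (E1 : INR (2*m+2) = INR (2*m+1) + 1) by (rewrite !plus_INR, !mult_INR; simpl; ring).
rewrite E1 in HA.
split. apply Rdiv_le_0_compat; lra.
apply (Rmult_le_reg_r (Ic (m+1))). lra.
replace (Jc (m+1) / Ic (m+1) * Ic (m+1)) with (Jc (m+1)) by (field; lra).
apply (Rmult_le_reg_l (INR (2*m+1))). lra.
replace (INR (2 * m + 1) * (1 / INR (2 * m + 1) * Ic (m + 1))) with (Ic (m+1)) by (field; lra).
nra.
Qed.

Fixpoint os (M:nat) : R := match M with 0 => 0 | S i => os i + 1/(INR (2*i+1))^2 end.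

Lemma os_zs M : zs (2*M) = os M + zs M / 4.
Proof.
induction M. simpl. lra.
replace (2 * S M)%nat with (S (S (2*M))) by lia.
change (zs (S (S (2*M)))) with (zs (2*M) + 1/(INR (S (2*M)))^2 + 1/(INR (S (S (2*M))))^2).
change (os (S M)) with (os M + 1/(INR (2*M+1))^2).
change (zs (S M)) with (zs M + 1/(INR (S M))^2).
rewrite IHM.
replace (S (2*M)) with (2*M+1)%nat by lia. replace (S (2*M+1)) with (2*(S M))%nat by lia.
rewrite (mult_INR 2). simpl (INR 2). field. split; apply not_0_INR; lia.
Qed.

Lemma basel_odd (eta : R) : 0 < eta -> exists M0, forall M, (M0 <= M)%nat -> PI^2/8 - eta <= os M.
Proof.
intros He.
destruct (archimed (2/eta)) as [H1 _].
assert (0 <= up (2/eta))%Z.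
{ apply le_IZR. assert (0 < 2/eta) by (apply Rdiv_lt_0_compat; lra). lra. }
exists (S (Z.to_nat (up (2/eta)))). intros M HM.
destruct M as [|m]. lia.
pose proof (os_zs (S m)). rewrite !zs_eq in H0.
replace (2 * S m)%nat with ((2*m+1)+1)%nat in H0 by lia.
replace (S m) with (m+1)%nat in H0 by lia.
pose proof (rr_bound (2*m+1)). pose proof (rr_bound m).
assert (INR (2 * (2*m+1) + 1) >= 2 / eta).
{ rewrite INR_IZR_INZ. apply Rle_ge. apply Rlt_le. eapply Rlt_le_trans. exact H1.
  apply IZR_le. rewrite <- (Z2Nat.id (up (2/eta))) by lia. apply inj_le. lia. }
assert (0 < 2/eta) by (apply Rdiv_lt_0_compat; lra).
assert (1 / INR (2 * (2 * m + 1) + 1) <= eta/2).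
{ unfold Rdiv. rewrite Rmult_1_l. replace (eta * /2) with (/ (2/eta)) by (field; lra).
  apply Rinv_le_contravar; lra. }
replace (S m) with (m+1)%nat by lia. lra.
Qed.
Section Cnt.
Local Open Scope nat_scope.

Lemma cnt_S P n : cnt P (S n) = cnt P n + (if excluded_middle_informative (P (S n)) then 1 else 0).
Proof. reflexivity. Qed.

Lemma cnt_le_n P n : cnt P n <= n.
Proof. induction n; simpl; [lia|]. destruct excluded_middle_informative; lia. Qed.

Lemma cnt_mono (P Q : nat -> Prop) n : (forall m, 1 <= m <= n -> P m -> Q m) -> cnt P n <= cnt Q n.
Proof.
induction n; intros H; simpl; [lia|].
assert (cnt P n <= cnt Q n) by (apply IHn; intros; apply H; auto; lia).
destruct (excluded_middle_informative (P (S n))); destruct (excluded_middle_informative (Q (S n))); try lia.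
exfalso. apply n0, H; auto; lia.
Qed.

Lemma cnt_ext (P Q : nat -> Prop) n : (forall m, 1 <= m <= n -> (P m <-> Q m)) -> cnt P n = cnt Q n.
Proof.
intros H. apply Nat.le_antisymm; apply cnt_mono; intros m Hm; apply H; auto.
Qed.

Lemma cnt_or_le (P Q : nat -> Prop) n : cnt (fun m => P m \/ Q m) n <= cnt P n + cnt Q n.
Proof.
induction n; simpl; [lia|].
destruct (excluded_middle_informative (P (S n) \/ Q (S n))) as [[h|h]|h];
destruct (excluded_middle_informative (P (S n))); destruct (excluded_middle_informative (Q (S n))); try tauto; lia.
Qed.

Lemma cnt_or_disj (P Q : nat -> Prop) n : (forall m, ~ (P m /\ Q m)) ->
  cnt (fun m => P m \/ Q m) n = cnt P n + cnt Q n.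
Proof.
intros D. induction n; simpl; [lia|].
specialize (D (S n)).
destruct (excluded_middle_informative (P (S n) \/ Q (S n))) as [[h|h]|h];
destruct (excluded_middle_informative (P (S n))); destruct (excluded_middle_informative (Q (S n))); try tauto; lia.
Qed.

Lemma cnt_false (P : nat -> Prop) n : (forall m, 1 <= m <= n -> ~ P m) -> cnt P n = 0.
Proof.
intros H. assert (cnt P n <= cnt (fun _ => False) n) by (apply cnt_mono; intros m Hm HP; apply (H m Hm HP)).
assert (cnt (fun _ => False) n = 0).
{ clear. induction n; simpl; auto. destruct excluded_middle_informative; [tauto|lia]. }
lia.
Qed.

Lemma cnt_shift P n j : cnt P (n + j) = cnt P n + cnt (fun m => P (n + m)) j.
Proof.
induction j. rewrite Nat.add_0_r. simpl. lia.
replace (n + S j) with (S (n + j)) by lia. rewrite !cnt_S, IHj.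
destruct (excluded_middle_informative (P (S (n + j)))); destruct (excluded_middle_informative (P (n + S j)));
 replace (n + S j) with (S (n+j)) in * by lia; try tauto; lia.
Qed.

Lemma cnt_periodic P T j : (forall m, P (T + m) <-> P m) -> cnt P (T * j) = j * cnt P T.
Proof.
intros HP. induction j. rewrite Nat.mul_0_r. reflexivity.
replace (T * S j) with (T + T * j) by lia. rewrite cnt_shift.
rewrite (cnt_ext (fun m => P (T + m)) P) by (intros; apply HP). lia.
Qed.

Lemma cnt_scale P q Y : 0 < q -> cnt (fun m => exists t, P t /\ m = q * t) (q * Y) = cnt P Y.
Proof.
intros Hq. induction Y. rewrite Nat.mul_0_r. reflexivity.
replace (q * S Y) with (q * Y + q) by lia. rewrite cnt_shift. rewrite IHY.
rewrite (cnt_S P Y).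
destruct q as [|q']. lia.
rewrite cnt_S.
rewrite (cnt_false _ q').
2:{ intros m Hm [t [Ht E]]. assert (Y < t) by nia. nia. }
destruct (excluded_middle_informative (P (S Y))); 
match goal with |- context [excluded_middle_informative ?X] => destruct (excluded_middle_informative X) as [[t [Ht E]]|h] end; try lia.
all: try (exfalso; apply h; exists (S Y); split; auto; lia).
all: try (assert (t = S Y) by nia; subst t; tauto).
Qed.
End Cnt.

Lemma periodic_density (P : nat -> Prop) T : (0 < T)%nat -> (forall m, P (T + m)%nat <-> P m) ->
  has_density P (INR (cnt P T) / INR T).
Proof.
intros HT HP eps He.
assert (HT' : 0 < INR T) by (apply lt_0_INR; lia).
destruct (archimed (INR T / eps)) as [Ha _].
assert (0 < INR T / eps) by (apply Rdiv_lt_0_compat; lra).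
assert (0 <= up (INR T / eps))%Z by (apply le_IZR; lra).
exists (Z.to_nat (up (INR T / eps))). intros n Hn.
set (N := S n).
assert (HN : INR T / eps < INR N).
{ assert (INR (Z.to_nat (up (INR T / eps))) = IZR (up (INR T / eps))) by (rewrite INR_IZR_INZ, Z2Nat.id; [reflexivity|lia]).
  unfold N. rewrite S_INR. pose proof (le_INR _ _ Hn). lra. }
assert (HN0 : 0 < INR N) by (apply lt_0_INR; unfold N; lia).
pose proof (Nat.div_mod N T ltac:(lia)) as Hd. pose proof (Nat.mod_upper_bound N T ltac:(lia)) as Hr.
set (q := (N / T)%nat) in *. set (r := (N mod T)%nat) in *.
assert (Hc : cnt P N = (q * cnt P T + cnt (fun m => P (T * q + m)%nat) r)%nat).
{ rewrite Hd at 1. rewrite cnt_shift. rewrite cnt_periodic by auto. reflexivity. }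
pose proof (cnt_le_n (fun m => P (T * q + m)%nat) r) as Hcr.
pose proof (cnt_le_n P T) as HcT.
unfold R_dist. fold N. rewrite Hc.
set (cr := cnt (fun m => P (T * q + m)%nat) r) in *. set (c := cnt P T) in *.
apply le_INR in Hcr. apply le_INR in HcT.
assert (INR r < INR T) by (apply lt_INR; lia).
assert (HNe : INR N = INR T * INR q + INR r) by (rewrite <- mult_INR, <- plus_INR; f_equal; exact Hd).
rewrite plus_INR, mult_INR.
assert (0 <= INR q) by apply pos_INR. assert (0 <= INR cr) by apply pos_INR.
assert (E : (INR q * INR c + INR cr) / INR N - INR c / INR T = (INR T * INR cr - INR c * INR r) / (INR T * INR N)) by (rewrite HNe; field; lra).
rewrite E.
assert (Rabs (INR T * INR cr - INR c * INR r) <= INR T * INR T).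
{ assert (0 <= INR c) by apply pos_INR. assert (0 <= INR r) by apply pos_INR.
  assert (INR T * INR cr <= INR T * INR T) by (apply Rmult_le_compat_l; lra).
  assert (INR c * INR r <= INR T * INR T) by (apply Rmult_le_compat; lra).
  assert (0 <= INR T * INR cr) by nra. assert (0 <= INR c * INR r) by nra.
  apply Rabs_le. split; lra. }
unfold Rdiv at 1. rewrite Rabs_mult, Rabs_inv, (Rabs_right (INR T * INR N)) by nra.
apply (Rle_lt_trans _ (INR T * INR T / (INR T * INR N))).
{ apply Rmult_le_compat_r; [|auto]. apply Rlt_le, Rinv_0_lt_compat; nra. }
replace (INR T * INR T / (INR T * INR N)) with (INR T / INR N) by (field; lra).
apply (Rmult_lt_reg_r (INR N)); auto. unfold Rdiv. rewrite Rmult_assoc, Rinv_l by lra.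
apply (Rmult_lt_reg_r (/ eps)). apply Rinv_0_lt_compat; lra.
replace (eps * INR N * / eps) with (INR N) by (field; lra). lra.
Qed.

Section NT.
Local Open Scope nat_scope.

Fixpoint Lp (k:nat) : nat := match k with 0 => 1 | S j => Lp j * ((2*j+3)*(2*j+3)) end.

Lemma Lp_div k i : 1 <= i <= k -> Nat.divide ((2*i+1)*(2*i+1)) (Lp k).
Proof.
induction k; intros H. lia.
simpl Lp. destruct (Nat.eq_dec i (S k)).
- subst. apply Nat.divide_mul_r. replace (2 * S k + 1) with (2*k+3) by lia. apply Nat.divide_refl.
- apply Nat.divide_mul_l. apply IHk. lia.
Qed.

Lemma Lp_mod4 k : Lp k mod 4 = 1.
Proof.
induction k. reflexivity. simpl Lp.
replace ((2*k+3)*(2*k+3)) with (4*(k*k+3*k+2)+1) by ring.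
replace (Lp k * (4 * (k * k + 3 * k + 2) + 1)) with (Lp k + 4*(Lp k * (k * k + 3 * k + 2))) by ring.
generalize (Lp k * (k * k + 3 * k + 2)). intros. lia.
Qed.

Lemma Lp_pos k : 0 < Lp k.
Proof. pose proof (Lp_mod4 k). destruct (Lp k). simpl in H. lia. lia. Qed.

Lemma div_mod0 d n : 0 < d -> (Nat.divide d n <-> n mod d = 0).
Proof. intros. split; [apply Nat.Lcm0.mod_divide|apply Nat.Lcm0.mod_divide]. Qed.

Definition Bp k n := n mod 4 = 2 /\ exists i, 1 <= i <= k /\ Nat.divide ((2*i+1)*(2*i+1)) n.
Definition Cp k n := n mod 4 = 2 /\ forall i, 1 <= i <= k -> ~ Nat.divide ((2*i+1)*(2*i+1)) n.
Definition Ep k n := Nat.divide (Lp k) n.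
Definition Ak k n := Bp k n \/ Ep k n.

Lemma sq_not_sqf d m : 2 <= d -> Nat.divide (d*d) m -> ~ squarefree m.
Proof. intros H1 H2 [_ H]. exact (H d H1 H2). Qed.

Lemma A_sum k a b : 1 <= k -> Ak k a -> Ak k b -> ~ squarefree (a + b).
Proof.
intros Hk [[Ha [i [Hi Hdi]]]|Ha] [[Hb [j [Hj Hdj]]]|Hb].
- apply (sq_not_sqf 2). lia. apply div_mod0; lia.
- apply (sq_not_sqf (2*i+1)). lia. apply Nat.divide_add_r; auto.
  eapply Nat.divide_trans. apply Lp_div; eauto. exact Hb.
- apply (sq_not_sqf (2*j+1)). lia. apply Nat.divide_add_r; auto.
  eapply Nat.divide_trans. apply Lp_div; eauto. exact Ha.
- apply (sq_not_sqf (2*1+1)). lia. apply Nat.divide_add_r;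
  eapply Nat.divide_trans; try apply (Lp_div k 1); auto; lia.
Qed.

Lemma findA r : r < 25 -> exists a, a < 900 /\ a mod 4 = 2 /\ a mod 9 = 0 /\ a mod 25 = r.
Proof.
intros Hr.
assert (H : List.forallb (fun r => List.existsb (fun a => andb (andb (a mod 4 =? 2) (a mod 9 =? 0)) (a mod 25 =? r)) (List.seq 0 900)) (List.seq 0 25) = true) by (vm_compute; reflexivity).
rewrite List.forallb_forall in H. specialize (H r ltac:(apply List.in_seq; lia)).
apply List.existsb_exists in H. destruct H as [a [Ha Hb]].
apply List.in_seq in Ha. rewrite !Bool.andb_true_iff, !Nat.eqb_eq in Hb. exists a. lia.
Qed.

Lemma cover4 k x : 2 <= k -> x mod 4 = 0 -> 900 <= x -> sumset2 (Ak k) x.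
Proof.
intros Hk H4 H9.
destruct (findA (x mod 25)) as [a [Ha1 [Ha2 [Ha3 Ha4]]]]. lia.
exists a, (x - a). split; [|split].
- left. split; auto. exists 1. split. lia. apply div_mod0; lia.
- left. split. lia. exists 2. split. lia. apply div_mod0; lia.
- lia.
Qed.

Lemma pickE k m : exists c, Ep k c /\ c <= 3 * Lp k /\ c mod 4 = m mod 4.
Proof.
exists (Lp k * (m mod 4)). split. exists (m mod 4). ring.
pose proof (Lp_mod4 k). split. nia.
rewrite Nat.Div0.mul_mod. rewrite H. rewrite Nat.mul_1_l. lia.
Qed.

Lemma cover_odd k m i : 1 <= i <= k -> Nat.divide ((2*i+1)*(2*i+1)) m -> 4 * Lp k <= m -> sumset2 (Ak k) m.
Proof.
intros Hi Hd Hm.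
destruct (pickE k (m + 2)) as [c [Hc [Hc3 Hc4]]].
exists c, (m - c). split; [|split].
- right. exact Hc.
- left. split. lia. exists i. split; auto. apply Nat.divide_sub_r; auto.
  eapply Nat.divide_trans. apply Lp_div; eauto. exact Hc.
- lia.
Qed.

Lemma cover3 k m : 2 <= k -> 4 * Lp k + 900 <= m -> sumset3 (Ak k) m.
Proof.
intros Hk Hm.
destruct (pickE k m) as [c [Hc [Hc3 Hc4]]].
destruct (cover4 k (m - c) Hk ltac:(lia) ltac:(lia)) as [a [b [Ha [Hb E]]]].
exists a, b, c. split; auto. split; auto. split. right; auto. lia.
Qed.
End NT.

Section Cov.
Local Open Scope nat_scope.

Lemma nonsqf m : 0 < m -> ~ squarefree m -> exists d, 2 <= d /\ Nat.divide (d*d) m.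
Proof.
intros H1 H2. apply NNPP. intros H3. apply H2. split; auto.
intros d Hd Hdd. apply H3. exists d; auto.
Qed.

Definition Big K m := exists d, K < d /\ Nat.divide (d*d) m.

Lemma N_Big k m : 2 <= k -> 4 * Lp k + 900 <= m -> 0 < m -> ~ squarefree m -> ~ sumset2 (Ak k) m -> Big (2*k+1) m.
Proof.
intros Hk Hm H0 Hs Hn. destruct (nonsqf m H0 Hs) as [d [Hd Hdd]].
destruct (Nat.Even_or_Odd d) as [[e He]|[i Hi]].
- exfalso. apply Hn. apply cover4; try lia. subst d.
  apply div_mod0. lia. eapply Nat.divide_trans; [|exact Hdd]. exists (e*e). ring.
- destruct (le_lt_dec i k).
  + exfalso. apply Hn. apply (cover_odd k m i). lia. subst; auto. lia.
  + exists d. split; auto. lia.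
Qed.

Lemma cnt_lt M n : cnt (fun m => m < M) n <= M.
Proof.
induction n. simpl. lia.
rewrite cnt_S. destruct excluded_middle_informative. pose proof (cnt_le_n (fun m => m < M) n). lia. lia.
Qed.

Lemma cnt_div q N : 0 < q -> cnt (fun m => Nat.divide q m) N = N / q.
Proof.
intros Hq. induction N. simpl. rewrite Nat.Div0.div_0_l. reflexivity.
rewrite cnt_S, IHN.
pose proof (Nat.div_mod N q ltac:(lia)). pose proof (Nat.mod_upper_bound N q ltac:(lia)).
set (a := N / q) in *. set (b := N mod q) in *.
destruct excluded_middle_informative as [h|h].
- apply div_mod0 in h; [|lia].
  assert (b + 1 = q).
  { destruct (Nat.eq_dec (b+1) q); auto. exfalso.
    assert (S N mod q = b + 1). { symmetry. apply Nat.mod_unique with a; lia. } lia. }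
  apply Nat.div_unique with 0; lia.
- assert (b + 1 <> q). { intros E. apply h. exists (a+1). lia. }
  rewrite Nat.add_0_r. apply Nat.div_unique with (b+1); lia.
Qed.

Definition BigD K D m := exists d, K < d <= D /\ Nat.divide (d*d) m.

Fixpoint sdiv K N D := match D with 0 => 0 | S D' => sdiv K N D' + (if K <? S D' then N / (S D' * S D') else 0) end.

Lemma cnt_BigD K N D : cnt (BigD K D) N <= sdiv K N D.
Proof.
induction D.
- simpl. rewrite cnt_false. lia. intros m _ [d Hd]. lia.
- change (sdiv K N (S D)) with (sdiv K N D + (if K <? S D then N / (S D * S D) else 0)).
  assert (cnt (BigD K (S D)) N <= cnt (fun m => BigD K D m \/ (K < S D /\ Nat.divide (S D * S D) m)) N).
  { apply cnt_mono. intros m _ [d [Hd1 Hd2]]. destruct (Nat.eq_dec d (S D)).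
    - right. subst; split; auto. lia.
    - left. exists d. split; auto. lia. }
  pose proof (cnt_or_le (BigD K D) (fun m => K < S D /\ Nat.divide (S D * S D) m) N). cbv beta in H0.
  destruct (Nat.ltb_spec K (S D)).
  + assert (cnt (fun m => K < S D /\ Nat.divide (S D * S D) m) N = N / (S D * S D)).
    { rewrite <- cnt_div by lia. apply cnt_ext. intros. tauto. }
    lia.
  + rewrite (cnt_false (fun m => K < S D /\ _)) in H0 by (intros; lia). lia.
Qed.

Lemma cnt_Big K N : cnt (Big K) N <= sdiv K N N.
Proof.
eapply Nat.le_trans; [|apply cnt_BigD]. apply cnt_mono.
intros m Hm [d [Hd1 Hd2]]. exists d. split; auto. split; auto.
apply Nat.divide_pos_le in Hd2; [|lia]. nia.
Qed.
End Cov.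

Lemma INR_div_le N q : (0 < q)%nat -> INR (N / q) <= INR N / INR q.
Proof.
intros Hq. pose proof (Nat.mul_div_le N q ltac:(lia)).
apply le_INR in H. rewrite mult_INR in H.
assert (0 < INR q) by (apply lt_0_INR; lia).
apply (Rmult_le_reg_l (INR q)); auto. replace (INR q * (INR N / INR q)) with (INR N) by (field; lra). lra.
Qed.

Lemma sdiv_bound K N D : (1 <= K)%nat -> INR (sdiv K N D) <= INR N * (1 / INR K - 1 / INR (Nat.max D K)).
Proof.
intros HK. assert (1 <= INR K) by (apply (le_INR 1); lia).
induction D.
- simpl. replace (1 / INR K - 1 / INR K) with 0 by ring. lra.
- change (sdiv K N (S D)) with (sdiv K N D + (if K <? S D then N / (S D * S D) else 0))%nat. rewrite plus_INR. destruct (Nat.ltb_spec K (S D)).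
  + rewrite (Nat.max_l (S D) K) by lia. rewrite (Nat.max_l D K) in IHD by lia.
    assert (1 <= INR D) by (apply (le_INR 1); lia).
    pose proof (INR_div_le N (S D * S D)%nat ltac:(lia)). rewrite mult_INR, S_INR in H2. rewrite S_INR.
    assert (0 <= INR N) by apply pos_INR.
    assert (INR N / ((INR D + 1) * (INR D + 1)) <= INR N * (1 / INR D - 1 / (INR D + 1))).
    { replace (INR N * (1 / INR D - 1 / (INR D + 1))) with (INR N / (INR D * (INR D + 1))) by (field; lra).
      unfold Rdiv. apply Rmult_le_compat_l; auto. apply Rinv_le_contravar; nra. }
    lra.
  + rewrite (Nat.max_r (S D) K) by lia. rewrite (Nat.max_r D K) in IHD by lia. simpl. lra.
Qed.

Section Inj.
Local Open Scope nat_scope.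

Lemma sq_cancel a b t t' : a*a*t = b*b*t' -> Nat.gcd b a = 1 -> Nat.divide (b*b) t.
Proof.
intros E G. destruct (Nat.eq_dec b 0) as [->|Hb].
- rewrite Nat.gcd_0_l in G. subst. simpl in E. rewrite Nat.add_0_r in E. subst. apply Nat.divide_0_r.
- assert (Nat.divide b (a * (a*t))) by (exists (b*t'); transitivity (a*a*t); [ring| rewrite E; ring]).
  apply Nat.gauss in H; auto. apply Nat.gauss in H; auto. destruct H as [t1 ->].
  assert (E2 : b * (a*a*t1) = b * (b*t')) by (transitivity (a*a*(t1*b)); [ring| rewrite E; ring]).
  apply Nat.mul_cancel_l in E2; auto.
  assert (Nat.divide b (a * (a*t1))) by (exists t'; transitivity (a*a*t1); [ring| rewrite E2; ring]).
  apply Nat.gauss in H; auto. apply Nat.gauss in H; auto. destruct H as [t2 ->].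
  exists t2. ring.
Qed.

Lemma odd_small k t y j : Cp k t -> Nat.divide (y*y) t -> j <= k -> Nat.divide y (2*j+1) -> y = 1.
Proof.
intros [_ HC] Hd Hj [g Hg].
destruct (Nat.Even_or_Odd y) as [[e He]|[i Hi]].
- subst y. exfalso. assert (2*j+1 = 2*(g*e)) by (rewrite Hg; ring). lia.
- subst y. destruct i. lia. exfalso. apply (HC (S i)); auto.
  assert (g <> 0) by (intro; subst; lia). nia.
Qed.

Lemma Q_inj k i j t t' : i <= k -> j <= k -> Cp k t -> Cp k t' ->
  (2*i+1)*(2*i+1)*t = (2*j+1)*(2*j+1)*t' -> i = j.
Proof.
intros Hi Hj Ct Ct' E.
set (n := 2*i+1) in *. set (n' := 2*j+1) in *.
set (g := Nat.gcd n n').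
destruct (Nat.gcd_divide_l n n') as [x Hx]. destruct (Nat.gcd_divide_r n n') as [y Hy]. fold g in Hx, Hy.
assert (Hg : g <> 0) by (intro H0; rewrite H0 in Hx; lia).
assert (Gxy : Nat.gcd x y = 1).
{ pose proof (Nat.gcd_mul_mono_r x y g). rewrite <- Hx, <- Hy in H. fold g in H.
  destruct (Nat.gcd x y) as [|[|z]]; nia. }
assert (E2 : x*x*t = y*y*t').
{ apply (Nat.mul_cancel_l _ _ (g*g)). nia. rewrite Hx, Hy in E. lia. }
assert (y = 1).
{ apply (odd_small k t y j); auto. apply (sq_cancel x y t t'); auto. rewrite Nat.gcd_comm; auto.
  exists g. unfold n' in Hy. lia. }
assert (x = 1).
{ apply (odd_small k t' x i); auto. apply (sq_cancel y x t' t); auto.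
  exists g. unfold n in Hx. lia. }
subst. unfold n, n' in *. lia.
Qed.

Definition Q k i m := exists t, Cp k t /\ m = (2*i+1)*(2*i+1) * t.

Fixpoint sQ k X j := match j with 0 => cnt (Q k 0) X | S j' => sQ k X j' + cnt (Q k (S j')) X end.

Lemma union_cnt k X j : j <= k -> cnt (fun m => exists i, i <= j /\ Q k i m) X = sQ k X j.
Proof.
induction j; intros Hj.
- simpl. apply cnt_ext. intros m _. split. intros [i [Hi HQ]]. replace i with 0 in HQ by lia. auto.
  intros HQ. exists 0. auto.
- simpl sQ. rewrite <- IHj by lia. rewrite <- cnt_or_disj.
  + apply cnt_ext. intros m _. split.
    * intros [i [Hi HQ]]. destruct (Nat.eq_dec i (S j)). subst. right; auto. left. exists i. split; auto. lia.
    * intros [[i [Hi HQ]]|HQ]. exists i. split; auto. exists (S j). auto.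
  + intros m [[i [Hi [t [Ht E]]]] [t' [Ht' E']]]. rewrite E in E'.
    assert (i = S j) by (eapply Q_inj; [| | exact Ht | exact Ht' | exact E']; lia). lia.
Qed.

Definition c2 m := m mod 4 = 2.

Lemma cnt_c2 Y : cnt c2 (4 * Y) = Y.
Proof.
rewrite cnt_periodic. 2:{ intros m. unfold c2. lia. }
assert (cnt c2 4 = 1).
{ unfold c2. cbn [cnt]. repeat destruct excluded_middle_informative; simpl in *; lia. }
lia.
Qed.

Lemma Q_c2 k i m : Q k i m -> c2 m.
Proof.
intros [t [[Ht _] E]]. unfold c2. subst.
replace ((2 * i + 1) * (2 * i + 1) * t) with (t + 4 * ((i*i+i) * t)) by ring.
generalize ((i*i+i)*t). intros. lia.
Qed.

Lemma Cp_per k m : Cp k (4 * Lp k + m) <-> Cp k m.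
Proof.
unfold Cp. assert (Hm : (4 * Lp k + m) mod 4 = m mod 4) by (generalize (Lp k); intros; lia).
rewrite Hm. split; intros [H1 H2]; split; auto; intros i Hi Hd; apply (H2 i Hi).
- apply Nat.divide_add_r; auto. apply Nat.divide_mul_r. apply Lp_div; auto.
- apply (Nat.divide_add_cancel_r _ (4 * Lp k)); auto. apply Nat.divide_mul_r. apply Lp_div; auto.
Qed.

Lemma cntQ k i : i <= k -> cnt (Q k i) (4 * Lp k * Lp k) = (Lp k / ((2*i+1)*(2*i+1))) * cnt (Cp k) (4 * Lp k).
Proof.
intros Hi. set (q := (2*i+1)*(2*i+1)).
assert (Hq : Nat.divide q (Lp k)).
{ destruct i. exists (Lp k). unfold q. ring. apply Lp_div. lia. }
destruct Hq as [w Hw].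
assert (Lp k / q = w) by (rewrite Hw; apply Nat.div_mul; unfold q; lia).
rewrite H. replace (4 * Lp k * Lp k) with (q * (4 * Lp k * w)) by (rewrite Hw at 2; ring).
unfold Q. fold q. rewrite cnt_scale by (unfold q; lia).
rewrite cnt_periodic by (apply Cp_per). ring.
Qed.

Lemma sQ_le k : sQ k (4 * Lp k * Lp k) k <= Lp k * Lp k.
Proof.
rewrite <- union_cnt by lia. replace (4 * Lp k * Lp k) with (4 * (Lp k * Lp k)) by ring.
rewrite <- (cnt_c2 (Lp k * Lp k)) at 2. apply cnt_mono.
intros m _ [i [_ HQ]]. eapply Q_c2; eauto.
Qed.
End Inj.

Lemma Ak_per k m : Ak k (4 * Lp k + m)%nat <-> Ak k m.
Proof.
unfold Ak, Bp, Ep. assert (Hm : ((4 * Lp k + m) mod 4 = m mod 4)%nat) by (generalize (Lp k); intros; lia).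
rewrite Hm.
assert (HD : forall q, Nat.divide q (Lp k) -> (Nat.divide q (4 * Lp k + m)%nat <-> Nat.divide q m)).
{ intros q Hq. split; intros H.
  - apply (Nat.divide_add_cancel_r _ (4 * Lp k)); auto. apply Nat.divide_mul_r; auto.
  - apply Nat.divide_add_r; auto. apply Nat.divide_mul_r; auto. }
rewrite (HD (Lp k)) by apply Nat.divide_refl.
split; (intros [[H1 [i [Hi Hd]]]|H]; [left; split; auto; exists i; split; auto; apply (HD _ (Lp_div k i Hi)); auto | right; auto]).
Qed.

Lemma cnt_BC k : (Lp k <= cnt (Ak k) (4 * Lp k) + cnt (Cp k) (4 * Lp k))%nat.
Proof.
rewrite <- (cnt_c2 (Lp k)) at 1.
eapply Nat.le_trans. 
apply (cnt_mono c2 (fun m => Bp k m \/ Cp k m)).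
{ intros m _ H. unfold c2 in H. destruct (classic (exists i, (1 <= i <= k)%nat /\ Nat.divide ((2*i+1)*(2*i+1)) m)) as [E|E].
  left. split; auto. right. split; auto. intros i Hi Hd. apply E. exists i. auto. }
rewrite cnt_or_disj.
2:{ intros m [[_ [i [Hi Hd]]] [_ HC]]. exact (HC i Hi Hd). }
apply Nat.add_le_mono_r. apply cnt_mono. intros m _ H. left. exact H.
Qed.

Lemma INR_div_exact a q : (0 < q)%nat -> Nat.divide q a -> INR (a / q) = INR a / INR q.
Proof.
intros Hq [w ->]. rewrite Nat.div_mul by lia. rewrite mult_INR. field. apply not_0_INR. lia.
Qed.

Lemma sQ_INR k j : (j <= k)%nat -> INR (sQ k (4 * Lp k * Lp k) j) = INR (cnt (Cp k) (4 * Lp k)) * INR (Lp k) * os (S j).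
Proof.
induction j; intros Hj.
- simpl sQ. rewrite cntQ by lia. simpl os. rewrite mult_INR. rewrite Nat.div_1_r. simpl. field.
- change (sQ k (4 * Lp k * Lp k) (S j)) with (sQ k (4 * Lp k * Lp k) j + cnt (Q k (S j)) (4 * Lp k * Lp k))%nat.
  rewrite plus_INR, IHj by lia. rewrite cntQ by lia. rewrite mult_INR.
  rewrite INR_div_exact by (try lia; apply Lp_div; lia).
  change (os (S (S j))) with (os (S j) + 1 / (INR (2 * S j + 1))^2).
  rewrite mult_INR. field. apply not_0_INR. lia.
Qed.

Lemma C_bound k : INR (cnt (Cp k) (4 * Lp k)) * os (S k) <= INR (Lp k).
Proof.
pose proof (sQ_le k) as H. apply le_INR in H. rewrite sQ_INR in H by lia. rewrite mult_INR in H.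
assert (0 < INR (Lp k)) by (apply lt_0_INR, Lp_pos).
apply (Rmult_le_reg_r (INR (Lp k))); auto. lra.
Qed.

Lemma up_nat (x : R) : 0 < x -> exists N : nat, forall n, (N <= n)%nat -> x < INR n.
Proof.
intros Hx. destruct (archimed x) as [H _].
assert (0 <= up x)%Z by (apply le_IZR; lra).
exists (Z.to_nat (up x)). intros n Hn.
assert (INR (Z.to_nat (up x)) = IZR (up x)) by (rewrite INR_IZR_INZ, Z2Nat.id; [reflexivity|lia]).
apply le_INR in Hn. lra.
Qed.

Lemma final_ineq (L a c S eps eta : R) : 0 < L -> L <= a + c -> c * S <= L ->
  PI^2/8 - eta <= S -> 0 < eta -> eta <= eps -> eta <= 1/10 ->
  a / (4 * L) > delta0 - eps.
Proof.
intros HL Hac HcS HS He1 He2 He3.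
unfold delta0. pose proof PI2_3_2 as Hpi.
set (p := PI^2/8) in *.
assert (Hp : 9/8 < p) by (unfold p; nra).
assert (HS1 : 1 < S) by lra.
assert (Hc : c <= L / S) by (apply (Rmult_le_reg_r S); [lra|]; unfold Rdiv; rewrite Rmult_assoc, Rinv_l; lra).
assert (Ha : a / (4*L) >= 1/4 - 1/(4*S)).
{ apply Rle_ge. apply (Rmult_le_reg_r (4*L)). lra. replace (a / (4*L) * (4*L)) with a by (field; lra).
  replace ((1/4 - 1/(4*S)) * (4*L)) with (L - L/S) by (field; lra). lra. }
assert (E : 2 / PI^2 = 1/(4*p)) by (unfold p; field; pose proof PI_RGT_0; lra).
rewrite E.
assert (1/S - 1/p <= eta).
{ replace (1/S - 1/p) with ((p - S)/(p*S)) by (field; lra).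
  assert (HpS : 1 <= p*S) by nra.
  apply (Rmult_le_reg_r (p*S)). nra. replace ((p - S) / (p * S) * (p * S)) with (p - S) by (field; lra).
  assert (0 <= eta * (p*S - 1)) by (apply Rmult_le_pos; lra). nra. }
assert (1/(4*S) = (1/S)/4) by (field; lra). assert (1/(4*p) = (1/p)/4) by (field; lra).
lra.
Qed.

Theorem theorem1 :
  forall eps : R, 0 < eps ->
  exists A : nat -> Prop,
    (exists d : R, has_density A d /\ d > delta0 - eps) /\
    (forall m : nat, sumset2 A m -> ~ squarefree m) /\
    (exists N : nat, forall m : nat, (N <= m)%nat -> sumset3 A m) /\
    upper_density_le
      (fun m => (0 < m)%nat /\ ~ squarefree m /\ ~ sumset2 A m) eps.
Proof.
intros eps He.
set (eta := Rmin eps (1/10)).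
assert (Heta : 0 < eta) by (unfold eta; apply Rmin_pos; lra).
assert (Heta1 : eta <= eps) by apply Rmin_l. assert (Heta2 : eta <= 1/10) by apply Rmin_r.
destruct (basel_odd eta Heta) as [M0 HM0].
destruct (up_nat (1/eps) ltac:(apply Rdiv_lt_0_compat; lra)) as [K1 HK1].
set (k := Nat.max (Nat.max M0 2) K1).
assert (Hk2 : (2 <= k)%nat) by lia.
assert (HS : PI^2/8 - eta <= os (S k)) by (apply HM0; lia).
assert (HK : 1 / INR (2*k+1) < eps).
{ assert (1/eps < INR (2*k+1)) by (apply HK1; lia).
  assert (0 < INR (2*k+1)) by (apply lt_0_INR; lia).
  apply (Rmult_lt_reg_r (INR (2*k+1))); auto. unfold Rdiv at 1. rewrite Rmult_assoc, Rinv_l by lra.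
  apply (Rmult_lt_reg_l (/eps)). apply Rinv_0_lt_compat; lra.
  replace (/eps * (eps * INR (2*k+1))) with (INR (2*k+1)) by (field; lra). lra. }
exists (Ak k). split; [|split; [|split]].
- exists (INR (cnt (Ak k) (4 * Lp k)) / INR (4 * Lp k)). split.
  + apply periodic_density. pose proof (Lp_pos k); lia. intros; apply Ak_per.
  + rewrite mult_INR. simpl (INR 4).
    replace (1 + 1 + 1 + 1) with 4 by ring.
    apply (final_ineq (INR (Lp k)) _ (INR (cnt (Cp k) (4 * Lp k))) (os (S k)) eps eta); auto.
    * apply lt_0_INR, Lp_pos.
    * rewrite <- plus_INR. apply le_INR, cnt_BC.
    * apply C_bound.
- intros m [a [b [Ha [Hb ->]]]]. apply (A_sum k); auto. lia.
- exists (4 * Lp k + 900)%nat. intros m Hm. apply cover3; auto.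
- intros eta' Heta'.
  set (M := (4 * Lp k + 900)%nat).
  destruct (up_nat (INR M / eta') ltac:(apply Rdiv_lt_0_compat; [apply lt_0_INR; unfold M; lia|lra])) as [N0 HN0].
  exists N0. intros n Hn.
  set (N := S n).
  assert (Hc : (cnt (fun m => (0 < m)%nat /\ ~ squarefree m /\ ~ sumset2 (Ak k) m) N <= M + sdiv (2*k+1) N N)%nat).
  { eapply Nat.le_trans. apply (cnt_mono _ (fun m => (m < M)%nat \/ Big (2*k+1) m)).
    { intros m _ [H1 [H2 H3]]. destruct (Nat.lt_ge_cases m M). left; auto. right. apply N_Big; auto. }
    eapply Nat.le_trans. apply cnt_or_le. pose proof (cnt_lt M N). pose proof (cnt_Big (2*k+1) N). lia. }
  apply le_INR in Hc. rewrite plus_INR in Hc.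
  pose proof (sdiv_bound (2*k+1) N N ltac:(lia)).
  assert (0 < INR (Nat.max N (2*k+1))) by (apply lt_0_INR; lia).
  assert (0 <= 1 / INR (Nat.max N (2 * k + 1))) by (apply Rlt_le, Rdiv_lt_0_compat; lra).
  assert (HN : 0 < INR N) by (apply lt_0_INR; unfold N; lia).
  assert (INR M / eta' < INR N) by (apply HN0; unfold N; lia).
  assert (INR M / INR N <= eta').
  { apply (Rmult_le_reg_r (INR N)); auto. unfold Rdiv; rewrite Rmult_assoc, Rinv_l by lra.
    apply (Rmult_le_reg_l (/eta')). apply Rinv_0_lt_compat; lra.
    replace (/eta' * (eta' * INR N)) with (INR N) by (field; lra).
    replace (/eta' * (INR M * 1)) with (INR M / eta') by (field; lra). lra. }
  assert (INR (cnt (fun m => (0 < m)%nat /\ ~ squarefree m /\ ~ sumset2 (Ak k) m) N) <= INR M + INR N * (1 / INR (2*k+1))) by nra.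
  apply (Rmult_le_reg_r (INR N)); auto. unfold Rdiv; rewrite Rmult_assoc, Rinv_l by lra.
  assert (INR M <= eta' * INR N).
  { apply (Rmult_le_reg_r (/ INR N)). apply Rinv_0_lt_compat; lra.
    replace (eta' * INR N * / INR N) with eta' by (field; lra). exact H3. }
  assert (INR N * (1 / INR (2 * k + 1)) <= eps * INR N) by nra.
  fold N. lra.
Qed.
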